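(* Let $X$ be a regular one-dimensional generalised diffusion on an interval $I$ with speed measure $m$ and scale function $s$, fix $\rho>0$ and a parameter $\theta$, and write $U(x)=U(x,\theta)=G(x,\theta)-R(x,\theta)$. Let $\Delta_-=\arg\max_{s\in\mathrm{int}(I)}[U(s)/\phi(s)]$ and $\Delta_+=\arg\max_{s\in\mathrm{int}(I)}[U(s)/\varphi(s)]$. If $x\in\Delta_+$ and $y\in\Delta_-$ then $x\le y$.
   Context: $\mathrm{int}(I)$ denotes the interior of $I$ together with its accessible boundary points. Standing boundary assumption: either both endpoints of $I$ are non-reflecting (absorbing or killing), or $X$ starts at a reflecting endpoint and the other endpoint is non-reflecting. $\varphi$ and $\phi$ are respectively the strictly increasing and strictly decreasing positive solutions of $\frac12\frac{d}{dm}\frac{d}{ds}f=\rho f$ (with the boundary conditions of $X$), normalised to equal $1$ at the starting point $X_0$; thus $\mathbb{E}_x[e^{-\rho H_y}]$ equals $\varphi(x)/\varphi(y)$ for $x\le y$ and $\phi(x)/\phi(y)$ for $x\ge y$, where $H_y=\inf\{t:X_t=y\}$. $G$ is a terminal reward, $c$ a running reward with $\mathbb{E}_x[\int_0^\infty e^{-\rho t}|c(X_t,\theta)|dt]<\infty$, and $R(x,\theta)=\mathbb{E}_x[\int_0^\infty e^{-\rho t}c(X_t,\theta)dt]$. Standing assumption: there is $\hat x\in\mathrm{int}(I)$ with $U(\hat x,\theta)>0$. *)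

(* Defs.v *)
From mathcomp Require Import all_boot all_order all_algebra.
From mathcomp Require Import boolp classical_sets reals.
Set Implicit Arguments. Unset Strict Implicit. Unset Printing Implicit Defensive.
Import Order.TTheory GRing.Theory Num.Theory.
Local Open Scope ring_scope.
Local Open Scope classical_set_scope.

Definition interval_set (R : realType) (J : set R) : Prop :=
  forall a b c : R, J a -> J c -> a <= b -> b <= c -> J b.

Definition argmax_on (R : realType) (D : set R) (f : R -> R) : set R :=
  [set s | D s /\ forall t, D t -> f t <= f s].

(* Main.v *)
Require Import Defs.
From mathcomp Require Import all_boot all_order all_algebra.
From mathcomp Require Import boolp classical_sets reals.
Import Order.TTheory GRing.Theory Num.Theory.
Local Open Scope ring_scope.
Local Open Scope classical_set_scope.

(* intI = int(I) (interior of I plus accessible boundary points);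
   varphi / phi = increasing / decreasing positive rho-eigenfunctions of the
   generator, normalised to 1 at X_0 = x0; G terminal reward, Rc = R(.,theta)
   the discounted running reward; U = G - Rc. *)
Theorem lemma3p4 (R : realType) (Theta : Type)
  (intI : set R) (hI : interval_set intI)
  (x0 : R) (hx0 : intI x0)
  (rho : R) (hrho : 0 < rho)
  (varphi phi : R -> R)
  (hvarphi_pos : forall s, intI s -> 0 < varphi s)
  (hphi_pos : forall s, intI s -> 0 < phi s)
  (hvarphi_inc : forall a b, intI a -> intI b -> a < b -> varphi a < varphi b)
  (hphi_dec : forall a b, intI a -> intI b -> a < b -> phi b < phi a)
  (hvarphi_x0 : varphi x0 = 1) (hphi_x0 : phi x0 = 1)
  (G Rc : R -> Theta -> R) (theta : Theta)
  (hU : exists xh, intI xh /\ 0 < G xh theta - Rc xh theta)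
  (x y : R) :
  argmax_on intI (fun s => (G s theta - Rc s theta) / varphi s) x ->
  argmax_on intI (fun s => (G s theta - Rc s theta) / phi s) y ->
  x <= y.
Proof.
move=> [Ix Mx] [Iy My].
rewrite leNgt; apply/negP => yx.
have [xh [Ixh Uh]] := hU.
set u := G x theta - Rc x theta in Mx My *.
set v := G y theta - Rc y theta in Mx My *.
have a0 := hvarphi_pos x Ix. have b0 := hvarphi_pos y Iy.
have c0 := hphi_pos x Ix. have d0 := hphi_pos y Iy.
have ba := hvarphi_inc y x Iy Ix yx.
have cd := hphi_dec y x Iy Ix yx.
have P0 : 0 < u / varphi x.
  apply: (lt_le_trans _ (Mx xh Ixh)); apply: divr_gt0 => //; exact: hvarphi_pos.
have Q0 : 0 < v / phi y.
  apply: (lt_le_trans _ (My xh Ixh)); apply: divr_gt0 => //; exact: hphi_pos.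
have QP := Mx y Iy. have PQ := My x Ix.
have e1 : u = (u / varphi x) * varphi x by rewrite divfK // gt_eqF.
have e2 : v = (v / varphi y) * varphi y by rewrite divfK // gt_eqF.
have e3 : u = (u / phi x) * phi x by rewrite divfK // gt_eqF.
have e4 : v = (v / phi y) * phi y by rewrite divfK // gt_eqF.
have h1 : v < u.
  rewrite e2 e1.
  apply: (le_lt_trans (y := (u / varphi x) * varphi y)).
    by rewrite ler_pM2r.
  by rewrite ltr_pM2l.
have h2 : u < v.
  rewrite {1}e3 e4.
  apply: (le_lt_trans (y := (v / phi y) * phi x)).
    by rewrite ler_pM2r.
  by rewrite ltr_pM2l.
by move: (lt_trans h1 h2); rewrite ltxx.
Qed.
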